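(* Let $G$ be a bipartite super edge-magic simple graph with stable sets $X$ and $Y$, and suppose $G\cong H_1\oplus H_2$ is a decomposition of $G$. Then $\lim_{n\to\infty}|\sigma_{S_{2n}(G;H_1,H_2)}|=\infty$.
   Context: For a $(p,q)$-graph $G$ ($p$ vertices, $q$ edges), an edge-magic labeling is a bijection $f:V(G)\cup E(G)\to[1,p+q]$ such that $f(x)+f(xy)+f(y)$ equals a constant (the valence) for every edge $xy$; it is super edge-magic if moreover $f(V(G))=[1,p]$. For a graph $H$, $\sigma_H$ is the set of integers that are valences of super edge-magic labelings of $H$. A decomposition $G\cong H_1\oplus H_2$ means $H_1,H_2$ are subgraphs of $G$ whose edge sets partition $E(G)$. Writing $X=\{x_i\}_{i=1}^s$, $Y=\{y_j\}_{j=1}^t$, $S_{2n}(G;H_1,H_2)$ is the graph with vertex set $X\cup Y\cup\bigcup_{k=1}^n X_k\cup\bigcup_{k=1}^n Y_k$, where $X_k=\{x_i^k\}_{i=1}^s$, $Y_k=\{y_j^k\}_{j=1}^t$ are new vertices, and edge set $E(G)\cup\{x_iy_j^k: x_iy_j\in E(H_1),\,k\in[1,n]\}\cup\{x_i^ky_j: x_iy_j\in E(H_2),\,k\in[1,n]\}$. *)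

(* Defs.v *)
From mathcomp Require Import all_boot.
Set Implicit Arguments. Unset Strict Implicit. Unset Printing Implicit Defensive.

(* A simple graph on a finite vertex type V is given by a (symmetric,
   irreflexive) adjacency relation adj.  Its edges are the 2-sets {x,y}
   with adj x y. *)
Definition is_edge (V : finType) (adj : rel V) (e : {set V}) : bool :=
  [exists x, exists y, adj x y && (e == [set x; y])].

Definition edge_type (V : finType) (adj : rel V) :=
  {e : {set V} | is_edge adj e}.

Definition nverts (V : finType) (adj : rel V) : nat := #|V|.
Definition nedges (V : finType) (adj : rel V) : nat :=
  #|[pred e : {set V} | is_edge adj e]|.

Definition sem_valence (V : finType) (adj : rel V) (k : nat) : Prop :=
  exists f : V + edge_type adj -> nat,
    [/\ injective f,
        (forall i, (exists z, f z = i) <-> (1 <= i <= nverts adj + nedges adj)),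
        (forall i, (exists v, f (inl v) = i) <-> (1 <= i <= nverts adj)) &
        (forall (e : edge_type adj) (x y : V), adj x y -> val e = [set x; y] ->
            f (inl x) + f (inr e) + f (inl y) = k)].

Definition sigma (V : finType) (adj : rel V) : nat -> Prop := sem_valence adj.

Definition super_edge_magic (V : finType) (adj : rel V) : Prop :=
  exists k, sem_valence adj k.

(* Bipartite graph G with stable sets X = {x_i}_{i<s}, Y = {y_j}_{j<t};
   E i j means x_i y_j is an edge. Vertices: inl i = x_i, inr j = y_j. *)
Definition bip_dir (s t : nat) (E : 'I_s -> 'I_t -> bool)
  (u v : 'I_s + 'I_t) : bool :=
  match u, v with inl i, inr j => E i j | _, _ => false end.

Definition bip_adj (s t : nat) (E : 'I_s -> 'I_t -> bool) : rel ('I_s + 'I_t) :=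
  fun u v => bip_dir E u v || bip_dir E v u.

(* Vertices of S_{2n}(G;H1,H2):
   inl (inl i) = x_i, inl (inr j) = y_j,
   inr (inl (k,i)) = x_i^k, inr (inr (k,j)) = y_j^k  (k : 'I_n). *)
Definition S2n_vert (s t n : nat) : finType :=
  (('I_s + 'I_t) + (('I_n * 'I_s) + ('I_n * 'I_t)))%type.

Definition S2n_dir (s t n : nat) (E E1 E2 : 'I_s -> 'I_t -> bool)
  (u v : S2n_vert s t n) : bool :=
  match u, v with
  | inl (inl i), inl (inr j) => E i j                 (* x_i y_j,   E(G)  *)
  | inl (inl i), inr (inr (_, j)) => E1 i j          (* x_i y_j^k, E(H1) *)
  | inr (inl (_, i)), inl (inr j) => E2 i j          (* x_i^k y_j, E(H2) *)
  | _, _ => false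
  end.

Definition S2n_adj (s t n : nat) (E E1 E2 : 'I_s -> 'I_t -> bool)
  : rel (S2n_vert s t n) :=
  fun u v => S2n_dir E E1 E2 u v || S2n_dir E E1 E2 v u.

Arguments S2n_adj {s t} n E E1 E2.

(* Main.v *)
Require Import Defs.
From mathcomp Require Import all_boot zify.
Set Implicit Arguments. Unset Strict Implicit. Unset Printing Implicit Defensive.

Lemma sum_set2 (V : finType) (h : V -> nat) (x y : V) : x != y ->
  \sum_(v in [set x; y]) h v = h x + h y.
Proof.
move=> nxy; rewrite big_setU1 /= ?big_set1 //.
by rewrite in_set1.
Qed.

Lemma L1 (V : finType) (adj : rel V) (h : V -> nat) (D Q : nat)
  (irr : forall x, ~~ adj x x)
  (hinj : injective h)
  (himg : forall i, (exists v, h v = i) <-> (1 <= i <= #|V|))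
  (H1 : forall e : edge_type adj, exists2 r, r < Q & \sum_(v in val e) h v + r = D)
  (H2 : forall r, r < Q -> exists e : edge_type adj, \sum_(v in val e) h v + r = D)
  (H3 : forall e1 e2 : edge_type adj,
     \sum_(v in val e1) h v = \sum_(v in val e2) h v -> e1 = e2) :
  sem_valence adj (#|V| + 1 + D).
Proof.
have hle : forall v, 1 <= h v <= #|V| by move=> v; apply/himg; exists v.
set p := #|V| in himg hle *.
set F := fun e : edge_type adj => D - \sum_(v in val e) h v.
have Finj : injective F.
  move=> e1 e2; rewrite /F => He; apply: H3.
  case: (H1 e1) => r1 lt1 E1; case: (H1 e2) => r2 lt2 E2; lia.
have HF : forall e, F e < Q /\ \sum_(v in val e) h v + F e = D.
  by move=> e; rewrite /F; case: (H1 e) => r lt E1; lia.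
have hQ : nedges adj = Q.
  rewrite /nedges -(card_sig (is_edge adj)) cardE.
  rewrite -(size_map F) -(size_iota 0 Q); apply: perm_size.
  apply: uniq_perm; first by rewrite (map_inj_uniq Finj) enum_uniq.
    exact: iota_uniq.
  move=> x; rewrite mem_iota add0n; apply/mapP/idP.
    by move=> [e _ ->]; have [] := HF e.
  move=> lt; case: (H2 x lt) => e He; exists e; first by rewrite mem_enum.
  have [_] := HF e; lia.
pose f := fun z : V + edge_type adj =>
  match z with inl v => h v | inr e => p + 1 + F e end.
exists f; split.
- move=> [v1|e1] [v2|e2] /=.
  + by move/hinj->.
  + move=> H; exfalso; have := hle v1; lia.
  + move=> H; exfalso; have := hle v2; lia.
  + by move=> H; congr inr; apply: Finj; lia.
- have -> : nverts adj = p by [].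
  move=> i; rewrite hQ; split.
    move=> [[v|e] <-] /=; first by have := hle v; lia.
    by have [] := HF e; lia.
  move=> /andP [i1 i2]; case: (leqP i p) => ile.
    have [v hv] : exists v, h v = i by apply/himg; lia.
    by exists (inl v).
  have [e He] := H2 (i - p - 1) ltac:(lia).
  exists (inr e) => /=; have [_] := HF e; lia.
- have -> : nverts adj = p by [].
  move=> i; split.
    by move=> [v <-]; apply/himg; exists v.
  by move/himg.
- move=> e x y axy ve /=.
  have nxy : x != y by apply/eqP=> exy; move: axy; rewrite exy; move: (irr y) => /negbTE ->.
  have [_] := HF e; rewrite ve sum_set2 //; lia.
Qed.
Definition base (s t n : nat) (w : S2n_vert s t n) : 'I_s + 'I_t :=
  match w with inl v => v | inr (inl (_, i)) => inl i | inr (inr (_, j)) => inr j end.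
Definition cp (s t n : nat) (w : S2n_vert s t n) : option 'I_n :=
  match w with inl _ => None | inr (inl (k, _)) => Some k | inr (inr (k, _)) => Some k end.
Definition mk (s t n : nat) (c : option 'I_n) (v : 'I_s + 'I_t) : S2n_vert s t n :=
  match c, v with
  | None, v => inl v
  | Some k, inl i => inr (inl (k, i))
  | Some k, inr j => inr (inr (k, j)) end.

Lemma mkK s t n (w : S2n_vert s t n) : mk (cp w) (base w) = w.
Proof. by case: w => [v|[[k i]|[k j]]]. Qed.
Lemma base_mk s t n c v : base (@mk s t n c v) = v.
Proof. by case: c => [k|]; case: v. Qed.
Lemma cp_mk s t n c v : cp (@mk s t n c v) = c.
Proof. by case: c => [k|]; case: v. Qed.

Definition off (n a : nat) (c : option 'I_n) : nat :=
  match c with None => a | Some k => if k < a then val k else k.+1 end.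
Definition offinv (n a o : nat) : option 'I_n :=
  if o == a then None else insub (if o < a then o else o.-1).

Lemma off_le n a (c : option (ordinal n)) : a <= n -> off a c <= n.
Proof. case: c => [k|] //= an; have := ltn_ord k; case: ifP; lia. Qed.

Lemma offinvK n a o : a <= n -> o <= n -> off a (offinv n a o) = o.
Proof.
move=> an on; rewrite /offinv; case: eqP => [->//|neq].
case: insubP => [k _ vk|]; last by case: ifP; lia.
rewrite /= vk; case: ifP; case: ifP; lia.
Qed.

Lemma off_inj n a (c1 c2 : option (ordinal n)) : a <= n -> off a c1 = off a c2 -> c1 = c2.
Proof.
move=> an; case: c1 => [k1|]; case: c2 => [k2|] //=.
- by move=> H; congr Some; apply: val_inj => /=; move: H; case: ifP; case: ifP; lia.
- case: ifP; lia.
- case: ifP; lia.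
Qed.

Lemma key (n b x1 x2 o1 o2 : nat) : b <= o1 <= b + n -> b <= o2 <= b + n ->
  b + n < n.+1 * x1 -> b + n < n.+1 * x2 ->
  n.+1 * x1 - o1 = n.+1 * x2 - o2 -> x1 = x2 /\ o1 = o2.
Proof.
move=> h1 h2 h3 h4 h5.
case: (ltngtP x1 x2) => H.
- have : n.+1 * x1.+1 <= n.+1 * x2 by rewrite leq_mul2l.
  rewrite mulnS; lia.
- have : n.+1 * x2.+1 <= n.+1 * x1 by rewrite leq_mul2l.
  rewrite mulnS; lia.
- subst; lia.
Qed.

Definition hlab (s t n : nat) (g : 'I_s + 'I_t -> nat) (a : nat) (w : S2n_vert s t n) : nat :=
  n.+1 * g (base w) - off a (cp w).

Lemma hlab_inj s t n g a : injective g -> (forall v, 1 <= g v) -> a <= n ->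
  injective (@hlab s t n g a).
Proof.
move=> ginj g1 an w1 w2; rewrite /hlab => H.
have := g1 (base w1); have := g1 (base w2).
have := off_le (cp w1) an; have := off_le (cp w2) an => o2 o1 gb2 gb1.
have [] := @key n 0 (g (base w1)) (g (base w2)) (off a (cp w1)) (off a (cp w2)) _ _ _ _ H.
- lia.
- lia.
- by rewrite mulSn; have := leq_pmulr n (g1 (base w1)); lia.
- by rewrite mulSn; have := leq_pmulr n (g1 (base w2)); lia.
move/ginj => hb /(off_inj an) hc.
by rewrite -(mkK w1) -(mkK w2) hb hc.
Qed.

Lemma card_S2n s t n : #|{: S2n_vert s t n}| = n.+1 * (s + t).
Proof. rewrite /S2n_vert !card_sum !card_prod !card_ord; lia. Qed.

Lemma hlab_img s t n g a : 
  (forall i, (exists v, g v = i) <-> (1 <= i <= s + t)) -> a <= n ->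
  forall i, (exists w, @hlab s t n g a w = i) <-> (1 <= i <= #|{: S2n_vert s t n}|).
Proof.
move=> gimg an i; rewrite card_S2n.
have gb : forall v, 1 <= g v <= s + t by move=> v; apply/gimg; exists v.
split.
  move=> [w <-]; rewrite /hlab; have := gb (base w); have := off_le (cp w) an.
  move=> o /andP [g1 g2].
  have : n.+1 * g (base w) <= n.+1 * (s + t) by rewrite leq_mul2l g2 orbT.
  have := leq_pmulr n g1; rewrite !mulSn; lia.
move=> /andP [i1 i2].
set m := (i + n) %/ n.+1.
have hd : i + n = m * n.+1 + (i + n) %% n.+1 by rewrite {1}(divn_eq (i + n) n.+1).
have hr : (i + n) %% n.+1 < n.+1 by rewrite ltn_pmod.
have m1 : 1 <= m.
  case: (posnP m) => [m0|//]; move: hd; rewrite m0 mul0n add0n; lia.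
have mp : m <= s + t.
  case: (leqP m (s + t)) => // hm.
  have : (s + t).+1 * n.+1 <= m * n.+1 by rewrite leq_mul2r hm orbT.
  move: i2; rewrite mulSn mulnC; lia.
have [v gv] : exists v, g v = m by apply/gimg; lia.
exists (mk (offinv n a (n - (i + n) %% n.+1)) v).
rewrite /hlab base_mk cp_mk offinvK //; last by lia.
rewrite gv mulnC; lia.
Qed.
Lemma bip_edge (s t : nat) (E : 'I_s -> 'I_t -> bool) i j :
  E i j -> is_edge (bip_adj E) [set inl i; inr j].
Proof.
move=> Eij; apply/existsP; exists (inl i); apply/existsP; exists (inr j).
by rewrite /bip_adj /= Eij eqxx.
Qed.

Lemma Gfacts (s t : nat) (E : 'I_s -> 'I_t -> bool)
  (hsem : super_edge_magic (bip_adj E)) :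
  exists (g : 'I_s + 'I_t -> nat) (T q0 : nat),
  [/\ injective g,
      forall i, (exists v, g v = i) <-> (1 <= i <= s + t),
      forall i j, E i j -> exists2 r, r < q0 & g (inl i) + g (inr j) + r = T,
      forall r, r < q0 -> exists i j, E i j /\ g (inl i) + g (inr j) + r = T &
      forall i1 j1 i2 j2, E i1 j1 -> E i2 j2 ->
        g (inl i1) + g (inr j1) = g (inl i2) + g (inr j2) -> i1 = i2 /\ j1 = j2].
Proof.
case: hsem => k0 [f0 [finj fimg vimg fval]].
have hp : nverts (bip_adj E) = s + t by rewrite /nverts card_sum !card_ord.
rewrite hp in fimg vimg.
set q := nedges (bip_adj E) in fimg *.
have vle : forall v, 1 <= f0 (inl v) <= s + t by move=> v; apply/vimg; exists v.
have ege : forall e, s + t < f0 (inr e) <= s + t + q.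
  move=> e; have ge1 : 1 <= f0 (inr e) <= s + t + q by apply/fimg; exists (inr e).
  suff : ~ f0 (inr e) <= s + t by lia.
  move=> le1.
  have [v hv] : exists v, f0 (inl v) = f0 (inr e) by apply/vimg; lia.
  by move/finj: hv.
pose eij i j (Eij : E i j) : edge_type (bip_adj E) := exist (fun e => is_edge (bip_adj E) e) [set inl i; inr j] (bip_edge Eij).
have val_eij : forall i j (Eij : E i j),
    f0 (inl (inl i)) + f0 (inr (eij i j Eij)) + f0 (inl (inr j)) = k0.
  by move=> i j Eij; apply: fval; rewrite // /bip_adj /= Eij.
exists (fun v => f0 (inl v)); exists (k0 - (s + t).+1); exists q; split.
- by move=> v1 v2 /finj [].
- by [].
- move=> i j Eij; exists (f0 (inr (eij i j Eij)) - (s + t).+1).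
    have := ege (eij i j Eij); lia.
  have := ege (eij i j Eij); have := val_eij i j Eij.
  set z := f0 (inr (eij i j Eij)); set z1 := f0 (inl (inl i)); set z2 := f0 (inl (inr j)); lia.
- move=> r lt.
  have [[v|e] hz] : exists z, f0 z = (s + t).+1 + r by apply/fimg; lia.
    by have := vle v; lia.
  have := valP e; case/existsP => x /existsP [y /andP [axy /eqP ve]].
  move: axy; case: x ve => [i|i]; case: y => [j|j] //= ve.
  + rewrite /bip_adj /= orbF => Eij; exists i, j; split => //.
    have := fval e (inl i) (inr j) ltac:(by rewrite /bip_adj /= Eij) ve.
    move: hz; set z := f0 (inr e); set z1 := f0 (inl (inl i)); set z2 := f0 (inl (inr j)); lia.
  + rewrite /bip_adj /= => Eij; exists j, i; split => //.
    have := fval e (inl j) (inr i) ltac:(by rewrite /bip_adj /= Eij) ltac:(by rewrite setUC; exact: ve).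
    move: hz; set z := f0 (inr e); set z1 := f0 (inl (inl j)); set z2 := f0 (inl (inr i)); lia.
- move=> i1 j1 i2 j2 E1 E2 hs.
  have h12 : f0 (inr (eij i1 j1 E1)) = f0 (inr (eij i2 j2 E2)).
    have := val_eij i1 j1 E1; have := val_eij i2 j2 E2; move: hs.
    set a1 := f0 (inl (inl i1)); set a2 := f0 (inl (inl i2)).
    set b1 := f0 (inl (inr j1)); set b2 := f0 (inl (inr j2)); lia.
  move/finj: h12 => [] hv.
  have H1 := congr1 (fun A : {set _} => inl i1 \in A) hv.
  have H2 := congr1 (fun A : {set _} => inr j1 \in A) hv.
  move: H1 H2; rewrite /= !inE /= !eqxx ?orbT /= => /esym H1 /esym H2.
  case/orP: H1 => /eqP H1; last by [].
  move/eqP: H2 => H2.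
  by case: H1 => ->; case: H2 => ->.
Qed.

Definition edge_of (s t n : nat) (E1 : 'I_s -> 'I_t -> bool) (i : 'I_s) (j : 'I_t)
  (c : option 'I_n) : {set S2n_vert s t n} :=
  match c with
  | None => [set inl (inl i); inl (inr j)]
  | Some k => if E1 i j then [set inl (inl i); inr (inr (k, j))]
              else [set inr (inl (k, i)); inl (inr j)]
  end.

Lemma edge_of_is s t n (E E1 E2 : 'I_s -> 'I_t -> bool)
  (hpart : forall i j, E i j = E1 i j || E2 i j) i j (c : option 'I_n) :
  E i j -> is_edge (S2n_adj n E E1 E2) (edge_of E1 i j c).
Proof.
move=> Eij; case: c => [k|] /=.
  case E1ij: (E1 i j).
    apply/existsP; exists (inl (inl i)); apply/existsP; exists (inr (inr (k, j))).
    by rewrite /S2n_adj /= E1ij eqxx.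
  have E2ij : E2 i j by move: Eij; rewrite hpart E1ij.
  apply/existsP; exists (inr (inl (k, i))); apply/existsP; exists (inl (inr j)).
  by rewrite /S2n_adj /= E2ij eqxx.
apply/existsP; exists (inl (inl i)); apply/existsP; exists (inl (inr j)).
by rewrite /S2n_adj /= Eij eqxx.
Qed.

Lemma classify s t n (E E1 E2 : 'I_s -> 'I_t -> bool)
  (hpart : forall i j, E i j = E1 i j || E2 i j)
  (hdisj : forall i j, ~~ (E1 i j && E2 i j))
  (e : edge_type (S2n_adj n E E1 E2)) :
  exists i j (c : option 'I_n), E i j /\ val e = edge_of E1 i j c.
Proof.
have := valP e; case/existsP => x /existsP [y /andP [axy /eqP ve]].
rewrite ve; clear ve; move: axy; rewrite /S2n_adj.
have E1E : forall i j, E1 i j -> E i j by move=> i j; rewrite hpart => ->.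
have E2E : forall i j, E2 i j -> E i j by move=> i j; rewrite hpart orbC => ->.
have E2n : forall i j, E2 i j -> E1 i j = false.
  by move=> i j h2; apply/negbTE; move: (hdisj i j); rewrite h2 andbT.
case: x => [[i|j]|[[k i]|[k j]]]; case: y => [[i'|j']|[[k' i']|[k' j']]] //=;
  rewrite ?orbF //=.
- by move=> h; exists i, j', None.
- by move=> h; exists i, j', (Some k'); rewrite /= h (E1E _ _ h).
- by move=> h; exists i', j, None; rewrite /= setUC.
- by move=> h; exists i', j, (Some k'); rewrite /= (E2n _ _ h) (E2E _ _ h) setUC.
- by move=> h; exists i, j', (Some k); rewrite /= (E2n _ _ h) (E2E _ _ h).
- by move=> h; exists i', j, (Some k); rewrite /= h (E1E _ _ h) setUC.
Qed.
Lemma sum_edge_of s t n (E1 : 'I_s -> 'I_t -> bool) (g : 'I_s + 'I_t -> nat) a i j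
  (c : option 'I_n) : (forall v, 1 <= g v) -> a <= n ->
  \sum_(v in edge_of E1 i j c) hlab g a v + (a + off a c) =
  n.+1 * (g (inl i) + g (inr j)).
Proof.
move=> g1 an; have oc := off_le c an.
have := leq_pmulr n (g1 (inl i)); have := leq_pmulr n (g1 (inr j)).
case: c oc => [k|] /= oc; [case: ifP => _|]; rewrite sum_set2 // /hlab /=;
  rewrite mulnDr !mulSn; lia.
Qed.

Lemma S2n_val s t n (E E1 E2 : 'I_s -> 'I_t -> bool)
  (hpart : forall i j, E i j = E1 i j || E2 i j)
  (hdisj : forall i j, ~~ (E1 i j && E2 i j))
  (g : 'I_s + 'I_t -> nat) (T q0 a : nat)
  (ginj : injective g)
  (gimg : forall i, (exists v, g v = i) <-> (1 <= i <= s + t))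
  (G3 : forall i j, E i j -> exists2 r, r < q0 & g (inl i) + g (inr j) + r = T)
  (G4 : forall r, r < q0 -> exists i j, E i j /\ g (inl i) + g (inr j) + r = T)
  (G5 : forall i1 j1 i2 j2, E i1 j1 -> E i2 j2 ->
        g (inl i1) + g (inr j1) = g (inl i2) + g (inr j2) -> i1 = i2 /\ j1 = j2)
  (an : a <= n) :
  sem_valence (S2n_adj n E E1 E2) (#|{: S2n_vert s t n}| + 1 + (n.+1 * T - a)).
Proof.
have g1 : forall v, 1 <= g v.
  move=> v; have /andP [-> _] // : 1 <= g v <= s + t.
  by apply/gimg; exists v.
apply: (@L1 _ _ (hlab g a) _ (n.+1 * q0)).
- by case => [[i|j]|[[k i]|[k j]]]; rewrite /S2n_adj /=.
- exact: hlab_inj.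
- exact: hlab_img.
- move=> e; have [i [j [c [Eij ve]]]] := classify hpart hdisj e.
  rewrite ve; have [r0 lt0 hr0] := G3 i j Eij.
  exists (n.+1 * r0 + off a c).
    have : n.+1 * r0.+1 <= n.+1 * q0 by rewrite leq_mul2l lt0 orbT.
    have := off_le c an; rewrite mulnS; lia.
  have hT : n.+1 * T = n.+1 * (g (inl i) + g (inr j)) + n.+1 * r0 by rewrite -hr0 mulnDr.
  have := sum_edge_of E1 i j c g1 an; lia.
- move=> r lt.
  have hd : r = r %/ n.+1 * n.+1 + r %% n.+1 by rewrite {1}(divn_eq r n.+1).
  have ho : r %% n.+1 <= n by rewrite -ltnS ltn_pmod.
  have lt0 : r %/ n.+1 < q0 by rewrite ltn_divLR // mulnC.
  have [i [j [Eij hs]]] := G4 _ lt0.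
  set c := offinv n a (r %% n.+1).
  exists (exist (fun e => is_edge (S2n_adj n E E1 E2) e) (edge_of E1 i j c) (edge_of_is hpart c Eij)).
  rewrite /=.
  have := sum_edge_of E1 i j c g1 an; rewrite /c offinvK //.
  have hT : n.+1 * T = n.+1 * (g (inl i) + g (inr j)) + n.+1 * (r %/ n.+1) by rewrite -hs mulnDr.
  move: hd; rewrite [_ * n.+1]mulnC; set S1 := \sum_(v in _) _; lia.
- move=> e1 e2 hs.
  have [i1 [j1 [c1 [E1ij ve1]]]] := classify hpart hdisj e1.
  have [i2 [j2 [c2 [E2ij ve2]]]] := classify hpart hdisj e2.
  move: hs; rewrite ve1 ve2 => hs.
  have h1 := sum_edge_of E1 i1 j1 c1 g1 an.
  have h2 := sum_edge_of E1 i2 j2 c2 g1 an.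
  have o1 := off_le c1 an; have o2 := off_le c2 an.
  have b1 : a + n < n.+1 * (g (inl i1) + g (inr j1)).
    have hx : 2 <= g (inl i1) + g (inr j1) by have := g1 (inl i1); have := g1 (inr j1); lia.
    have := leq_mul (leqnn n) hx; rewrite mulSn; lia.
  have b2 : a + n < n.+1 * (g (inl i2) + g (inr j2)).
    have hx : 2 <= g (inl i2) + g (inr j2) by have := g1 (inl i2); have := g1 (inr j2); lia.
    have := leq_mul (leqnn n) hx; rewrite mulSn; lia.
  have [] := @key n a _ _ (a + off a c1) (a + off a c2) _ _ b1 b2; try lia.
  move=> /(G5 _ _ _ _ E1ij E2ij) [ei ej] eo.
  have ec : c1 = c2 by apply: (off_inj an); lia.
  by apply: val_inj; rewrite ve1 ve2 ei ej ec.
Qed.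

Lemma S2n_val0 s t n (E E1 E2 : 'I_s -> 'I_t -> bool)
  (hpart : forall i j, E i j = E1 i j || E2 i j)
  (hdisj : forall i j, ~~ (E1 i j && E2 i j))
  (g : 'I_s + 'I_t -> nat)
  (ginj : injective g)
  (gimg : forall i, (exists v, g v = i) <-> (1 <= i <= s + t))
  (noE : forall i j, ~~ E i j) (D : nat) :
  sem_valence (S2n_adj n E E1 E2) (#|{: S2n_vert s t n}| + 1 + D).
Proof.
have g1 : forall v, 1 <= g v.
  move=> v; have /andP [-> _] // : 1 <= g v <= s + t.
  by apply/gimg; exists v.
apply: (@L1 _ _ (hlab g 0) _ 0).
- by case => [[i|j]|[[k i]|[k j]]]; rewrite /S2n_adj /=.
- exact: hlab_inj.
- exact: hlab_img.
- move=> e; have [i [j [c [Eij _]]]] := classify hpart hdisj e.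
  by move: (noE i j); rewrite Eij.
- by [].
- move=> e; have [i [j [c [Eij _]]]] := classify hpart hdisj e.
  by move: (noE i j); rewrite Eij.
Qed.

Unset Implicit Arguments.
Theorem mainTheorem12 (s t : nat) (E E1 E2 : 'I_s -> 'I_t -> bool)
  (hpart : forall i j, E i j = E1 i j || E2 i j)
  (hdisj : forall i j, ~~ (E1 i j && E2 i j))
  (hsem : super_edge_magic (bip_adj E)) :
  forall M : nat, exists N : nat, forall n : nat, N <= n ->
    exists ks : seq nat, [/\ uniq ks, M <= size ks &
      forall k, k \in ks -> sigma (S2n_adj n E E1 E2) k].
Proof.
move=> M; have [g [T [q0 [ginj gimg G3 G4 G5]]]] := Gfacts hsem.
exists M => n Mn.
case: (boolP [exists i, exists j, E i j]) => [/existsP [i0 /existsP [j0 E0]] | /existsPn noE].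
- have g1 : forall v, 1 <= g v.
    move=> v; have /andP [-> _] // : 1 <= g v <= s + t.
    by apply/gimg; exists v.
  have Tb : n.+1 <= n.+1 * T.
    have [r _ hr] := G3 i0 j0 E0.
    have T1 : 0 < T by move: hr (g1 (inl i0)); set y := g (inl i0); lia.
    exact: leq_pmulr.
  exists [seq #|{: S2n_vert s t n}| + 1 + (n.+1 * T - a) | a <- iota 0 n.+1]; split.
  + rewrite map_inj_in_uniq ?iota_uniq // => a1 a2; rewrite !mem_iota => h1 h2; lia.
  + by rewrite size_map size_iota; lia.
  + move=> k /mapP [a]; rewrite mem_iota => ha ->.
    apply: (S2n_val hpart hdisj ginj gimg G3 G4 G5); lia.
- have noE' : forall i j, ~~ E i j by move=> i j; move/existsPn: (noE i); apply.
  exists (iota (#|{: S2n_vert s t n}| + 1) M); split.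
  + exact: iota_uniq.
  + by rewrite size_iota.
  + move=> k; rewrite mem_iota => hk.
    have -> : k = #|{: S2n_vert s t n}| + 1 + (k - (#|{: S2n_vert s t n}| + 1)) by lia.
    exact: (S2n_val0 n hpart hdisj ginj gimg noE').
Qed.
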